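(* For every integer $n\ge 0$, $$\Phi^{(1)}[a; bq^n, b'; c; x, y] = \sum_{k=0}^n \begin{bmatrix} n \\ k \end{bmatrix} q^{2\binom{k}{2}} \frac{(bx)^k (a; q)_k}{(c; q)_k} \Phi^{(1)}[aq^k; bq^k, b'; cq^k; x, y]$$ and $$\Phi^{(1)}[a; bq^{-n}, b'; c; x, y] = \sum_{k=0}^n \begin{bmatrix} n \\ k \end{bmatrix} q^{\binom{k}{2} - nk} \frac{(-bx)^k (a; q)_k}{(c; q)_k} \Phi^{(1)}[aq^k; b, b'; cq^k; x, y].$$
   Context: Let $q$ be a complex number with $0<|q|<1$. For complex $z$ and integer $m\ge 0$, $(z;q)_m=\prod_{j=0}^{m-1}(1-zq^j)$, with $(z;q)_0=1$. For integers $0\le k\le n$, $\begin{bmatrix} n \\ k \end{bmatrix}=\frac{(q;q)_n}{(q;q)_k(q;q)_{n-k}}$ is the $q$-binomial coefficient. The $q$-Appell function $\Phi^{(1)}$ is $$\Phi^{(1)}[a; b, b'; c; x, y] = \sum_{m, n \geq 0} \frac{(a; q)_{m+n} (b; q)_m (b'; q)_n}{(q; q)_m (q; q)_n (c; q)_{m+n}} x^m y^n.$$ Identities are understood as identities of power series in $x,y$ (formal, or convergent for small $|x|,|y|$), with complex parameters chosen so that no denominator occurring vanishes. *)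

(* Defs.v *)
From HB Require Import structures.
From mathcomp Require Import all_boot all_order all_algebra.
From mathcomp Require Import reals.
From mathcomp.real_closed Require Import complex.
Set Implicit Arguments. Unset Strict Implicit. Unset Printing Implicit Defensive.
Import Order.TTheory GRing.Theory Num.Theory.
Local Open Scope ring_scope.
Local Open Scope complex_scope.

Definition qpoch (C : ringType) (z q : C) (m : nat) : C :=
  \prod_(j < m) (1 - z * q ^+ j).

Definition qbinom (C : fieldType) (q : C) (n k : nat) : C :=
  qpoch q q n / (qpoch q q k * qpoch q q (n - k)).

(* Bivariate formal power series in x, y, represented by their coefficient
   function: f i j is the coefficient of x^i y^j. *)
Definition fps2 (C : Type) := nat -> nat -> C.

Definition qAppell1 (C : fieldType) (q a b b' c : C) : fps2 C :=
  fun m n => qpoch a q (m + n) * qpoch b q m * qpoch b' q n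
             / (qpoch q q m * qpoch q q n * qpoch c q (m + n)).

Definition fps2_mulXk (C : ringType) (k : nat) (f : fps2 C) : fps2 C :=
  fun m n => if (k <= m)%N then f (m - k)%N n else 0.

(* Main.v *)
From HB Require Import structures.
From mathcomp Require Import all_boot all_order all_algebra.
From mathcomp Require Import reals.
From mathcomp.real_closed Require Import complex.
From mathcomp Require Import ring zify.
Require Import Defs.
Set Implicit Arguments. Unset Strict Implicit. Unset Printing Implicit Defensive.
Import Order.TTheory GRing.Theory Num.Theory.
Local Open Scope ring_scope.

Lemma qpoch0 (F : ringType) (z q : F) : qpoch z q 0 = 1.
Proof. by rewrite /qpoch big_ord0. Qed.

Lemma qpochS (F : ringType) (z q : F) m : qpoch z q m.+1 = qpoch z q m * (1 - z * q ^+ m).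
Proof. by rewrite /qpoch big_ord_recr. Qed.

Lemma qpochSl (F : comRingType) (z q : F) m : qpoch z q m.+1 = (1 - z) * qpoch (z * q) q m.
Proof.
rewrite /qpoch big_ord_recl /= expr0 mulr1; congr (_ * _).
by apply: eq_bigr => i _; rewrite /bump /= add1n exprS mulrA.
Qed.

Lemma qpochD (F : comRingType) (z q : F) k l :
  qpoch z q (k + l) = qpoch z q k * qpoch (z * q ^+ k) q l.
Proof.
rewrite /qpoch big_split_ord /=; congr (_ * _).
by apply: eq_bigr => i _; rewrite exprD mulrA.
Qed.

Definition P (F : fieldType) (q z : F) m := qpoch z q m / qpoch q q m.
Definition T (F : fieldType) (q z : F) k m :=
  if (k <= m)%N then P q (z * q ^+ k) (m - k) else 0.
Definition U (F : fieldType) (q z : F) k m :=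
  if (k <= m)%N then P q z (m - k) else 0.
Definition qb (F : fieldType) (q : F) n k := if (k <= n)%N then qbinom q n k else 0.


Lemma P0 {F : fieldType} (q : F) (z : F) : P q z 0 = 1.
Proof. by rewrite /P !qpoch0 divr1. Qed.

Lemma P_step {F : fieldType} (q : F) (z : F) m : (forall m, qpoch q q m != 0) ->
  P q (z * q) m.+1 = P q z m.+1 + z * P q (z * q) m.
Proof.
move=> hqq; rewrite /P [qpoch (z*q) q m.+1]qpochS [qpoch z q m.+1]qpochSl [qpoch q q m.+1]qpochS.
have h1 := hqq m.  have h2 := hqq m.+1. rewrite qpochS in h2.
have h3 : 1 - q * q ^+ m != 0 by move: h2; rewrite mulf_eq0 negb_or => /andP[].
field. by rewrite h1 h3.
Qed.

Lemma T_step {F : fieldType} (q : F) (z : F) k m : (forall m, qpoch q q m != 0) ->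
  T q (z * q) k m = T q z k m + z * q ^+ k * T q z k.+1 m.
Proof.
move=> hqq; rewrite /T.
case: (leqP k m) => hk; last first.
  by rewrite leqNgt ltnS (ltnW hk) mulr0 addr0.
case: (ltnP k m) => hk2.
  have -> : (m - k = (m - k.+1).+1)%N by rewrite subnSK.
  have e1 : z * q * q ^+ k = z * q ^+ k * q by rewrite -!mulrA (mulrC q).
  have e2 : z * q ^+ k.+1 = z * q ^+ k * q by rewrite exprSr mulrA.
  by rewrite e1 e2 P_step.
have -> : m = k by apply/eqP; rewrite eqn_leq hk hk2.
by rewrite subnn !P0 mulr0 addr0.
Qed.

Lemma U_step {F : fieldType} (q : F) (z : F) k m : q != 0 -> (forall m, qpoch q q m != 0) ->
  U q (z * q^-1) k m = U q z k m - z * q^-1 * U q z k.+1 m.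
Proof.
move=> hq hqq; rewrite /U.
case: (leqP k m) => hk; last first.
  by rewrite leqNgt ltnS (ltnW hk) mulr0 subr0.
case: (ltnP k m) => hk2.
  have -> : (m - k = (m - k.+1).+1)%N by rewrite subnSK.
  have := P_step (z * q^-1) (m - k.+1) hqq.
  rewrite mulfVK // => ->. by rewrite addrK.
have -> : m = k by apply/eqP; rewrite eqn_leq hk hk2.
by rewrite subnn !P0 mulr0 subr0.
Qed.


Lemma hqs {F : fieldType} (q : F) : (forall m, qpoch q q m != 0) -> forall j, 1 - q * q ^+ j != 0.
Proof.
move=> hqq j; have := hqq j.+1; rewrite qpochS mulf_eq0 negb_or => /andP[] //.
Qed.

Lemma qbinomnn {F : fieldType} (q : F) n : (forall m, qpoch q q m != 0) -> qbinom q n n = 1.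
Proof. by move=> hqq; rewrite /qbinom subnn qpoch0 mulr1 divff. Qed.

Lemma qbinomn0 {F : fieldType} (q : F) n : (forall m, qpoch q q m != 0) -> qbinom q n 0 = 1.
Proof. by move=> hqq; rewrite /qbinom subn0 qpoch0 mul1r divff. Qed.

Lemma qb0 {F : fieldType} (q : F) n : (forall m, qpoch q q m != 0) -> qb q n 0 = 1.
Proof. by move=> hqq; rewrite /qb leq0n qbinomn0. Qed.

Lemma qb_out {F : fieldType} (q : F) n k : (n < k)%N -> qb q n k = 0.
Proof. by move=> h; rewrite /qb leqNgt h. Qed.

Lemma pascal_gen {F : fieldType} (q : F) k d : (forall m, qpoch q q m != 0) ->
  exists A B N : F, A != 0 /\ B != 0 /\ N != 0 /\
   qbinom q (k + d.+1).+1 k.+1 = N * (1 - q * q ^+ k * q ^+ d.+1) / (A * (1 - q * q ^+ k) * B * (1 - q * q ^+ d)) /\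
   qbinom q (k + d.+1) k = N / (A * (B * (1 - q * q ^+ d))) /\
   qbinom q (k + d.+1) k.+1 = N / (A * (1 - q * q ^+ k) * B).
Proof.
move=> hqq; exists (qpoch q q k), (qpoch q q d), (qpoch q q (k + d.+1)).
do 3!split => //; rewrite /qbinom; split; last split.
- have -> : ((k + d.+1).+1 - k.+1 = d.+1)%N by rewrite subSS addnC addnK.
  rewrite [qpoch q q (k + d.+1).+1]qpochS [qpoch q q k.+1]qpochS [qpoch q q d.+1]qpochS.
  by rewrite exprD !mulrA.
- rewrite addKn.
  by rewrite [qpoch q q d.+1]qpochS.
- rewrite addnS subSS addKn.
  by rewrite [qpoch q q k.+1]qpochS.
Qed.

Lemma pascal1 {F : fieldType} (q : F) n k : (forall m, qpoch q q m != 0) ->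
  qb q n.+1 k.+1 = qb q n k + q ^+ k.+1 * qb q n k.+1.
Proof.
move=> hqq; case: (ltngtP k n) => hk.
- have [d ->] : exists d, n = (k + d.+1)%N by exists (n - k.+1)%N; lia.
  rewrite /qb !ifT; try by lia.
  have [A [B [N [hA [hB [hN [-> [-> ->]]]]]]]] := pascal_gen k d hqq.
  have h1 := hqs hqq k. have h2 := hqs hqq d.
  rewrite !exprS. field. by rewrite hA hB h1 h2.
- by rewrite !qb_out ?mulr0 ?addr0 // ltnS ltnW.
- by rewrite hk /qb leqnn ltnn leqnn !qbinomnn // mulr0 addr0.
Qed.

Lemma pascal2 {F : fieldType} (q : F) n k : (forall m, qpoch q q m != 0) ->
  qb q n.+1 k.+1 = qb q n k.+1 + q ^+ (n - k) * qb q n k.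
Proof.
move=> hqq; case: (ltngtP k n) => hk.
- have [d ->] : exists d, n = (k + d.+1)%N by exists (n - k.+1)%N; lia.
  rewrite /qb !ifT; try by lia.
  have [A [B [N [hA [hB [hN [-> [-> ->]]]]]]]] := pascal_gen k d hqq.
  have h1 := hqs hqq k. have h2 := hqs hqq d.
  have -> : (k + d.+1 - k = d.+1)%N by rewrite addnC addnK.
  rewrite !exprS. field. by rewrite hA hB h1 h2.
- by rewrite !qb_out ?mulr0 ?addr0 // ltnS ltnW.
- by rewrite hk /qb leqnn ltnn leqnn !qbinomnn // subnn expr0 mulr1 add0r.
Qed.

Lemma shift_sum {F : fieldType} (f : nat -> F) n : f n.+1 = 0 ->
  \sum_(k < n.+1) f k = f 0%N + \sum_(k < n.+1) f k.+1.
Proof.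
move=> h; rewrite big_ord_recl [in RHS]big_ord_recr /= h addr0.
by congr (_ + _); apply: eq_bigr => i _; rewrite lift0.
Qed.

Lemma wS {F : fieldType} (q : F) k : q ^+ (2 * 'C(k.+1, 2)) = q ^+ (2 * 'C(k, 2)) * q ^+ k * q ^+ k.
Proof. by rewrite binS bin1 mulnDr exprD (mul2n k) -addnn exprD mulrA. Qed.

Lemma qA {F : fieldType} (q : F) n : (forall m, qpoch q q m != 0) -> forall b m,
  P q (b * q ^+ n) m = \sum_(k < n.+1) qb q n k * q ^+ (2 * 'C(k, 2)) * b ^+ k * T q b k m.
Proof.
move=> hqq; elim: n => [|n IH] b m.
  by rewrite big_ord1 qb0 // /T leq0n bin0n /= !expr0 ?mulr1 ?subn0 ?mul1r ?mulr1.
rewrite exprS mulrA IH.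
pose X k := qb q n k * q ^+ (2 * 'C(k, 2)) * q ^+ k * b ^+ k * T q b k m.
pose Y k := qb q n k * q ^+ (2 * 'C(k, 2)) * q ^+ k * b ^+ k * (b * q ^+ k) * T q b k.+1 m.
have -> : \sum_(k < n.+1) qb q n k * q ^+ (2 * 'C(k, 2)) * (b * q) ^+ k * T q (b * q) k m
   = \sum_(k < n.+1) X k + \sum_(k < n.+1) Y k.
  rewrite -big_split; apply: eq_bigr => k _; rewrite /X /Y T_step // exprMn /=; ring.
rewrite (shift_sum (f := X)); last by rewrite /X qb_out // !mul0r.
rewrite [RHS]big_ord_recl -addrA -big_split; congr (_ + _).
  by rewrite /X /= qb0 // qb0 // !expr0 !mulr1.
apply: eq_bigr => k _; rewrite /X /Y /=.
have -> : bump 0 k = k.+1 by [].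
rewrite pascal1 // wS !exprS; ring.
Qed.

Lemma qB {F : fieldType} (q : F) n : q != 0 -> (forall m, qpoch q q m != 0) -> forall b m,
  P q (b * (q ^+ n)^-1) m =
  \sum_(k < n.+1) qb q n k * (q ^+ 'C(k, 2) / q ^+ (n * k)) * (- b) ^+ k * U q b k m.
Proof.
move=> hq hqq; elim: n => [|n IH] b m.
  by rewrite big_ord1 qb0 // /U leq0n bin0n /= !expr0 ?invr1 ?mulr1 ?subn0 ?mul1r ?mulr1.
rewrite exprS invfM mulrA IH.
pose v n k := q ^+ 'C(k, 2) / q ^+ (n * k).
pose X k := qb q n k * v n k * (- (b * q^-1)) ^+ k * U q b k m.
pose Y k := - (qb q n k * v n k * (- (b * q^-1)) ^+ k * (b * q^-1)) * U q b k.+1 m.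
have -> : \sum_(k < n.+1) qb q n k * (q ^+ 'C(k, 2) / q ^+ (n * k)) * (- (b * q^-1)) ^+ k * U q (b * q^-1) k m
   = \sum_(k < n.+1) X k + \sum_(k < n.+1) Y k.
  rewrite -big_split; apply: eq_bigr => k _; rewrite /X /Y /v U_step //= ; ring.
rewrite (shift_sum (f := X)); last by rewrite /X qb_out // !mul0r.
rewrite [RHS]big_ord_recl -addrA -big_split; congr (_ + _).
  by rewrite /X /v /= qb0 // qb0 // !expr0 !muln0 !expr0 !invr1 !mulr1.
apply: eq_bigr => -[k hk0] _; rewrite /X /Y /v /=; clear hk0.
have -> : bump 0 k = k.+1 by [].
rewrite pascal2 //.
case: (leqP k n) => hk; last first.
  rewrite !qb_out //; last exact: ltnW. ring.
have [d ->] : exists d, n = (k + d)%N by exists (n - k)%N; lia.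
rewrite addKn binS bin1 mulSn !mulnS !exprD -mulNr !exprMn !exprVn !exprS.
field.
by rewrite hq !expf_neq0.
Qed.



Lemma appell_P (F : fieldType) (q a z b' c : F) i j :
  qAppell1 q a z b' c i j =
  qpoch a q (i + j) * qpoch b' q j / (qpoch q q j * qpoch c q (i + j)) * P q z i.
Proof. rewrite /qAppell1 /P !invfM; ring. Qed.

Lemma term1 (F : fieldType) (q a z b' c X : F) k i j :
  X * qpoch a q k / qpoch c q k *
    fps2_mulXk k (qAppell1 q (a * q ^+ k) z b' (c * q ^+ k)) i j =
  qpoch a q (i + j) * qpoch b' q j / (qpoch q q j * qpoch c q (i + j)) *
    (X * if (k <= i)%N then P q z (i - k) else 0).
Proof.
rewrite /fps2_mulXk; case: leqP => h; last by rewrite !mulr0.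
have [l ->] : exists l, i = (k + l)%N by exists (i - k)%N; rewrite subnKC.
rewrite addKn -addnA (qpochD a q k (l + j)) (qpochD c q k (l + j)).
rewrite /qAppell1 /P !invfM; ring.
Qed.

Local Open Scope complex_scope.

Theorem theorem4 (R : realType) (q a b b' c : R[i])
  (hq0 : 0 < `|q|) (hq1 : `|q| < 1)
  (hc : forall j : nat, c * q ^+ j != 1) (n : nat) :
  (forall i j : nat,
     qAppell1 q a (b * q ^+ n) b' c i j =
     \sum_(k < n.+1)
        qbinom q n k * q ^+ (2 * 'C(k, 2)) * b ^+ k * qpoch a q k / qpoch c q k
        * fps2_mulXk k (qAppell1 q (a * q ^+ k) (b * q ^+ k) b' (c * q ^+ k)) i j)
  /\
  (forall i j : nat,
     qAppell1 q a (b * q ^- n) b' c i j =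
     \sum_(k < n.+1)
        qbinom q n k * q ^ ('C(k, 2)%:Z - (n * k)%:Z) * (- b) ^+ k * qpoch a q k
        / qpoch c q k
        * fps2_mulXk k (qAppell1 q (a * q ^+ k) b b' (c * q ^+ k)) i j).
Proof.
have hq : q != 0 by rewrite -normr_gt0.
have hqq : forall m, qpoch q q m != 0.
  move=> m; apply/prodf_neq0 => j _; rewrite subr_eq0 eq_sym -exprS.
  apply/negP => /eqP h.
  have := exprn_ilt1 j.+1 (normr_ge0 q) hq1.
  by rewrite -normrX h normr1 ltxx.
split => i j.
  rewrite appell_P qA // mulr_sumr; apply: eq_bigr => k _.
  rewrite term1 /T /qb ifT; last by rewrite -ltnS ltn_ord.
  by [].
rewrite appell_P qB // mulr_sumr; apply: eq_bigr => k _.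
rewrite term1 /U /qb ifT; last by rewrite -ltnS ltn_ord.
by rewrite expfzDr // -exprnN.
Qed.
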